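(* For every integer $j\ge0$ let \[ \beta_j(x)=\sum_{s=0}^j\binom{j-\frac12}{s}\binom{j}{s}x^{2j-2s}(x^2-1)^s . \] Then $\beta_j(x)=P_{2j}(x)$, where $P_n(x)=\frac{1}{2^nn!}\frac{d^n}{dx^n}(x^2-1)^n$ is the $n$-th Legendre polynomial.
   Context: $\binom{j-\frac12}{s}=\frac{(j-\frac12)(j-\frac32)\cdots(j-\frac12-s+1)}{s!}$. *)

(* Defs.v *)
From mathcomp Require Import all_boot all_order all_algebra.
Set Implicit Arguments. Unset Strict Implicit. Unset Printing Implicit Defensive.
Import Order.TTheory GRing.Theory Num.Theory.
Local Open Scope ring_scope.

Definition gbinom (R : fieldType) (a : R) (s : nat) : R :=
  (\prod_(i < s) (a - i%:R)) / (s`!)%:R.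

Definition beta (R : fieldType) (j : nat) : {poly R} :=
  \sum_(s < j.+1)
     (gbinom (j%:R - 2^-1) s * ('C(j, s))%:R) *: ('X^(2 * j - 2 * s) * ('X^2 - 1) ^+ s).

Definition legendre (R : fieldType) (n : nat) : {poly R} :=
  ((2 ^ n * n`!)%:R)^-1 *: (('X^2 - 1) ^+ n)^`(n).

(* Main.v *)
Require Import Defs.
From mathcomp Require Import all_boot all_order all_algebra.
From mathcomp Require Import ring lra zify.
Set Implicit Arguments. Unset Strict Implicit. Unset Printing Implicit Defensive.
Import Order.TTheory GRing.Theory Num.Theory.
Lemma binbin j s k : k <= s -> s <= j -> 'C(j,s) * 'C(s,k) = 'C(j,k) * 'C(j-k,s-k).
Proof.
move=> ks sj.
apply/eqP; rewrite -(eqn_pmul2r (_ : 0 < k`! * (s-k)`! * (j-s)`!)); last by rewrite !muln_gt0 !fact_gt0.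
have -> : 'C(j,s) * 'C(s,k) * (k`! * (s-k)`! * (j-s)`!) = 'C(j,s) * ('C(s,k) * (k`! * (s-k)`!)) * (j-s)`! by ring.
have -> : 'C(j,k) * 'C(j-k,s-k) * (k`! * (s-k)`! * (j-s)`!) = 'C(j,k) * (k`! * ('C(j-k,s-k) * ((s-k)`! * ((j-k) - (s-k))`!))).
  have -> : (j-k) - (s-k) = j - s by lia.
  ring.
rewrite bin_fact // -mulnA bin_fact // bin_fact; last by lia.
by rewrite bin_fact //; lia.
Qed.


Lemma natid j k : k <= j -> 'C(j,k) * (2*j)`! = 'C(2*j,k) * (2*j-k)^_j * j`!.
Proof.
move=> kj.
apply/eqP; rewrite -(eqn_pmul2r (_ : 0 < k`! * (j-k)`!)); last by rewrite !muln_gt0 !fact_gt0.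
have -> : 'C(j,k) * (2*j)`! * (k`! * (j-k)`!) = ('C(j,k) * (k`! * (j-k)`!)) * (2*j)`! by ring.
rewrite bin_fact //.
have -> : 'C(2*j,k) * (2*j-k)^_j * j`! * (k`! * (j-k)`!) = 'C(2*j,k) * (k`! * ((2*j-k)^_j * ((2*j-k) - j)`!)) * j`!.
  have -> : (2*j-k) - j = j - k by lia.
  ring.
rewrite ffact_fact; last by lia.
rewrite bin_fact; last by lia.
by rewrite mulnC.
Qed.

Local Open Scope ring_scope.

Lemma fact_neq0 (R : numFieldType) n : (n`!)%:R != 0 :> R.
Proof. by rewrite pnatr_eq0 -lt0n fact_gt0. Qed.

Lemma gbinS (R : numFieldType) (b : R) s :
  gbinom (b + 1) s.+1 = gbinom b s.+1 + gbinom b s.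
Proof.
rewrite /gbinom big_ord_recl big_ord_recr /=.
have -> : \prod_(i < s) (b + 1 - (bump 0 i)%:R) = \prod_(i < s) (b - i%:R).
  by apply: eq_bigr => i _; rewrite /bump /= add1n -addn1 natrD; ring.
set P := \prod_(i < s) _.
rewrite factS natrM.
have h1 := fact_neq0 R s.
have h2 : (s.+1)%:R != 0 :> R by rewrite pnatr_eq0.
field; by rewrite h1 addrC natr1 h2. Qed.

Lemma gvander (R : numFieldType) (a : R) m : forall k,
  \sum_(u < m.+1) ('C(m, u))%:R * gbinom a (k + u) = gbinom (a + m%:R) (k + m).
Proof.
elim: m => [|m IH] k.
  by rewrite big_ord_recl big_ord0 bin0 mul1r addr0 addn0 addr0.
rewrite big_ord_recl /= bin0 mul1r addn0.
under eq_bigr => i _ do rewrite /bump /= add1n binS natrD mulrDl addnS.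
rewrite big_split /=.
have E2 : \sum_(i < m.+1) ('C(m, i))%:R * gbinom a (k + i).+1
          = gbinom (a + m%:R) (k.+1 + m).
  by rewrite -IH; apply: eq_bigr => i _; rewrite addSn.
have E1 : gbinom a k + \sum_(i < m.+1) ('C(m, i.+1))%:R * gbinom a (k + i).+1
          = gbinom (a + m%:R) (k + m).
  transitivity (\sum_(u < m.+2) ('C(m, u))%:R * gbinom a (k + u)).
    rewrite [RHS]big_ord_recl /= bin0 mul1r addn0; congr (_ + _).
    by apply: eq_bigr => i _; rewrite /bump /= add1n addnS.
  rewrite -IH big_ord_recr /= bin_small // mul0r addr0.
  by apply: eq_bigr => i _.
rewrite addrA E1 E2 -natr1 addrA addnS gbinS addSn.
by rewrite addrC.
Qed.

Lemma keysum (R : numFieldType) (a : R) (j k : nat) : (k <= j)%N ->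
  \sum_(s < j.+1) gbinom a s * ('C(j,s) * 'C(s,k))%:R
  = ('C(j,k))%:R * gbinom (a + (j-k)%:R) j.
Proof.
move=> kj.
rewrite -(big_mkord xpredT (fun s => gbinom a s * ('C(j,s) * 'C(s,k))%:R)).
rewrite (big_cat_nat (leq0n k) (leqW kj)) /=.
rewrite big1_seq ?add0r; last first.
  move=> s /andP[_]; rewrite mem_index_iota => /andP[_ sk].
  by rewrite (bin_small sk) muln0 mulr0.
have := big_addn 0 j.+1 k xpredT (fun s => gbinom a s * ('C(j,s) * 'C(s,k))%:R).
rewrite add0n => ->.
rewrite subSn // big_mkord.
have -> : gbinom (a + (j-k)%:R) j = gbinom (a + (j-k)%:R) (k + (j-k)) by rewrite subnKC.
rewrite -gvander mulr_sumr.
apply: eq_bigr => i _.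
have hi := ltn_ord i.
rewrite binbin ?leq_addl; last by lia.

  by rewrite addnK natrM addnC; ring.
by [].

Qed.

Lemma prod_split (R : comRingType) (x : R) n :
  \prod_(i < 2 * n) (x - i%:R) = \prod_(i < n) ((x - (2*i)%:R) * (x - (2*i).+1%:R)).
Proof.
elim: n => [|n IH]; first by rewrite muln0 !big_ord0.
have -> : (2 * n.+1 = (2 * n).+2)%N by lia.
by rewrite !big_ord_recr /= IH mulrA.
Qed.

Lemma ff_R (R : numFieldType) (m n : nat) : (n <= m)%N ->
  ((m ^_ n)%:R : R) = \prod_(i < n) (m%:R - i%:R).
Proof.
move=> nm; rewrite ffact_prod natr_prod; apply: eq_bigr => i _.
rewrite natrB //; have := ltn_ord i; lia.
Qed.

Lemma prod2 (R : comRingType) (c : R) n (G : 'I_n -> R) :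
  \prod_(i < n) (c * G i) = c ^+ n * \prod_(i < n) G i.
Proof. by rewrite big_split /= prodr_const card_ord. Qed.

Lemma numid (R : numFieldType) (j k : nat) : (k <= j)%N ->
  ('C(j,k))%:R * gbinom ((j%:R - 2^-1) + (j-k)%:R) j
  = ((2 ^ (2*j) * (2*j)`!)%:R)^-1 * ('C(2*j,k) * (2*(2*j-k)) ^_ (2*j))%:R :> R.
Proof.
move=> kj.
set b := (j%:R - 2^-1) + (j-k)%:R.
set P := \prod_(i < j) (b - i%:R).
set F := (((2*j-k) ^_ j)%:R : R).
have HF : ((2*(2*j-k)) ^_ (2*j))%:R = 2 ^+ j * F * (2 ^+ j * P) :> R.
  rewrite ff_R; last by lia.
  rewrite prod_split big_split /=.
  rewrite /F ff_R; last by lia.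
  have -> : \prod_(i < j) ((2 * (2 * j - k))%:R - (2 * i)%:R) = \prod_(i < j) (2 * ((2*j-k)%:R - i%:R)) :> R.
    by apply: eq_bigr => i _; rewrite !natrM; ring.
  have -> : \prod_(i < j) ((2 * (2 * j - k))%:R - (2 * i).+1%:R) = \prod_(i < j) (2 * (b - i%:R)) :> R.
    apply: eq_bigr => i _; rewrite /b.
    have e : (2*j-k)%:R = 2 * j%:R - k%:R :> R by rewrite natrB ?natrM //; lia.
    have e2 : (j-k)%:R = j%:R - k%:R :> R by rewrite natrB.
    rewrite -natr1 !natrM e e2; by field.
  rewrite !prod2 -/P; ring.
have HC : ('C(j,k))%:R = ('C(2*j,k))%:R * F * (j`!)%:R / ((2*j)`!)%:R :> R.
  have H := congr1 (fun n => n%:R : R) (natid kj); rewrite /= !natrM in H.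
  apply: (mulIf (fact_neq0 R (2*j))); rewrite H /F.
  by field; rewrite fact_neq0.
rewrite (natrM _ ('C(2*j,k))) HF HC /gbinom -/P natrM natrX.
have h1 := fact_neq0 R j.
have h2 := fact_neq0 R (2*j).
have -> : (2:R) ^+ (2*j) = 2 ^+ j * 2 ^+ j by rewrite mul2n -addnn exprD.
have h3 : (2:R) ^+ j != 0 by rewrite expf_neq0 // pnatr_eq0.
set t := (2:R) ^+ j.
by field; rewrite h1 h2 h3.
Qed.

Lemma widen_sum (V : nmodType) n m (F : nat -> V) : (n <= m)%N ->
  (forall k, (n <= k)%N -> F k = 0) -> \sum_(k < n) F k = \sum_(k < m) F k.
Proof.
move=> nm F0.
rewrite -!(big_mkord xpredT) (big_cat_nat (leq0n n) nm) /=.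
rewrite [X in _ = _ + X]big1_seq ?addr0 // => k /andP[_].
by rewrite mem_index_iota => /andP[h _]; apply: F0.
Qed.

Lemma aux (R : numFieldType) (p : {poly R}) i c : p * (-1)^+i *+ c = ((-1)^+i *+ c) *: p.
Proof. by rewrite -mul_polyC rmorphMn rmorphXn rmorphN1 mulrC mulrnAl. Qed.

Lemma beta_term (R : numFieldType) (c : R) (j s : nat) : (s <= j)%N ->
  c *: ('X^(2 * j - 2 * s) * ('X^2 - 1) ^+ s)
  = \sum_(k < (2*j).+1) (c * ((-1)^+k *+ 'C(s,k))) *: 'X^(2*j - 2*k).
Proof.
move=> sj.
rewrite exprDn (widen_sum (m := (2*j).+1) (F := fun k => ('X^2)^+(s-k) * (-1)^+k *+ 'C(s,k))); last first.
- by move=> k sk; rewrite bin_small ?mulr0n.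
- by lia.
rewrite mulr_sumr scaler_sumr; apply: eq_bigr => k _.
case: (leqP k s) => ks.
  rewrite aux -exprM -scalerAr -exprD scalerA.
  congr (_ *: 'X^_); lia.
rewrite bin_small // !mulr0n.
by rewrite !mulr0 scaler0 scale0r.
Qed.

Lemma leg_exp (R : numFieldType) n : legendre R n =
  \sum_(i < n.+1) (((2 ^ n * n`!)%:R)^-1 * ((-1)^+i *+ 'C(n,i) *+ (2*(n-i)) ^_ n)) *: 'X^(2*(n-i) - n).
Proof.
rewrite /legendre exprDn raddf_sum scaler_sumr; apply: eq_bigr => i _.
rewrite aux -exprM; rewrite [X in _ *: X = _](derivnZ n) /= derivnXn -scalerMnr scalerMnl !scalerA.
done.
Qed.

Unset Implicit Arguments.

Theorem lemma6p8 (R : numFieldType) (j : nat) :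
  beta R j = legendre R (2 * j).
Proof.
rewrite /beta leg_exp.
set A := fun s : nat => gbinom (j%:R - 2^-1 : R) s * ('C(j, s))%:R.
transitivity (\sum_(s < j.+1) \sum_(k < (2*j).+1)
    (A s * ((-1)^+k *+ 'C(s,k))) *: 'X^(2*j - 2*k)).
  by apply: eq_bigr => s _; rewrite -beta_term // -ltnS.
rewrite exchange_big /=; apply: eq_bigr => k _; rewrite -scaler_suml.
case: (leqP k j) => kj.
  have -> : (2 * (2 * j - k) - 2 * j = 2 * j - 2 * k)%N by lia.
  congr (_ *: _).
  have E : forall s : 'I_j.+1, A s * ((-1)^+k *+ 'C(s,k))
       = (-1)^+k * (gbinom (j%:R - 2^-1) s * ('C(j,s) * 'C(s,k))%:R).
    by move=> s; rewrite /A -mulr_natr natrM; ring.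
  rewrite (eq_bigr _ (fun s _ => E s)) -mulr_sumr keysum //.
  rewrite -mulrnA -mulr_natr mul1r numid //; ring.
rewrite big1; last by move=> s _; rewrite bin_small ?mulr0n ?mulr0 //; apply: (leq_trans (ltn_ord s)).
rewrite ffact_small ?mulr0n ?mulr0 ?scale0r //. have := ltn_ord k; lia.
Qed.
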